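(* Let $N\ge 1$ and let $D\in\mathcal{M}_{2N,2N}(\mathbb{R})$ be a symmetric, negative semidefinite matrix with $\operatorname{Ker} D=\operatorname{Span}(\mathbf{1})$, where $\mathbf{1}=(1,\dots,1)^T\in\mathbb{R}^{2N}$. Assume moreover that $D_{i,j}\ge 0$ for all $i\neq j$, and that there exists a sequence $k_0,\dots,k_n$ of integers in $\{1,\dots,2N\}$ containing every integer of $\{1,\dots,2N\}$, with $k_m\neq k_{m+1}$ and $D_{k_m,k_{m+1}}>0$ for all $m$. Let $F\in\mathbb{R}^{2N}$ have strictly positive components, and let $\ln(F)$ denote the vector $(\ln F_1,\dots,\ln F_{2N})^T$. Then the following are equivalent: (1) $DF=0$; (2) $F=\rho\mathbf{1}$ with $\rho=\frac{1}{2N}\sum_{j=1}^{2N}F_j$; (3) $\langle DF,\ln(F)\rangle=0$, where $\langle U,W\rangle=\sum_{k=1}^{2N}U_kW_k$.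
   Context: The matrix $D$ is a velocity discretization of a linear collision operator; $\langle\cdot,\cdot\rangle$ is the Euclidean inner product on $\mathbb{R}^{2N}$. *)

(* Defs.v *)
From mathcomp Require Import all_boot all_order all_algebra.
From mathcomp Require Import all_classical all_reals all_analysis.
Set Implicit Arguments. Unset Strict Implicit. Unset Printing Implicit Defensive.
Import Order.TTheory GRing.Theory Num.Theory.
Local Open Scope ring_scope.

Definition dotv (R : realType) (n : nat) (U W : 'cV[R]_n) : R :=
  \sum_(k < n) U k 0 * W k 0.

Definition lnv (R : realType) (n : nat) (F : 'cV[R]_n) : 'cV[R]_n :=
  \col_k ln (F k 0).

Definition onev (R : realType) (n : nat) : 'cV[R]_n := const_mx 1.

(* Main.v *)
Require Import Defs.
From mathcomp Require Import all_boot all_order all_algebra.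
From mathcomp Require Import all_classical all_reals all_analysis.
From mathcomp Require Import ring.
Import Order.TTheory GRing.Theory Num.Theory.
Local Open Scope ring_scope.

Lemma lnprod {R: realType} {a b : R}: 0<a -> 0<b ->
  0 < (a - b) * (ln a - ln b) \/ a = b.
Proof.
move=> ha hb; case: (ltrgtP a b) => hab; last by right.
- left; have hl : ln a < ln b by rewrite ltr_ln ?posrE.
  rewrite -mulrNN !opprB; apply: mulr_gt0; by rewrite subr_gt0.
- left; have hl : ln b < ln a by rewrite ltr_ln ?posrE.
  apply: mulr_gt0; by rewrite subr_gt0.
Qed.

Theorem proposition2 (R : realType) (N : nat) (hN : (1 <= N)%N)
  (D : 'M[R]_(2 * N))
  (Dsym : D^T = D)
  (Dnsd : forall x : 'cV[R]_(2 * N), (x^T *m D *m x) 0 0 <= 0)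
  (Dker : forall x : 'cV[R]_(2 * N),
      D *m x = 0 <-> exists c : R, x = c *: onev R (2 * N))
  (Doff : forall i j : 'I_(2 * N), i != j -> 0 <= D i j)
  (k : seq 'I_(2 * N)) (k0 : 'I_(2 * N))
  (kne : (0 < size k)%N)
  (kall : forall i : 'I_(2 * N), i \in k)
  (kchain : forall m : nat, (m.+1 < size k)%N ->
      nth k0 k m != nth k0 k m.+1 /\ 0 < D (nth k0 k m) (nth k0 k m.+1))
  (F : 'cV[R]_(2 * N)) (Fpos : forall i : 'I_(2 * N), 0 < F i 0) :
  let rho := (2 * N)%:R^-1 * \sum_(j < 2 * N) F j 0 in
  (D *m F = 0 <-> F = rho *: onev R (2 * N)) /\
  (F = rho *: onev R (2 * N) <-> dotv (D *m F) (lnv F) = 0).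
Proof.
move=> rho.
have Hrho : forall c, F = c *: onev R (2 * N) -> c = rho.
  move=> c hc; rewrite /rho hc.
  under eq_bigr => j _ do rewrite !mxE mulr1.
  rewrite sumr_const card_ord -(mulr_natr c) mulrCA mulVf ?mulr1 //.
  by rewrite pnatr_eq0 -lt0n muln_gt0 /= hN.
have E12 : D *m F = 0 <-> F = rho *: onev R (2 * N).
  split.
  - by case/Dker => c hc; rewrite -(Hrho c hc).
  - by move=> h; apply/Dker; exists rho.
split => //.
split.
  move=> h; have -> : D *m F = 0 by apply/E12.
  by rewrite /dotv big1 // => i _; rewrite mxE mul0r.
move=> hX; apply/E12.
pose f := fun i : 'I_(2 * N) => (F i 0 : R).
pose l := fun i : 'I_(2 * N) => ln (F i 0).
have rows : forall i, \sum_j D i j = 0.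
  move=> i; have h1 : D *m onev R (2 * N) = 0 by apply/Dker; exists 1; rewrite scale1r.
  have := congr1 (fun M : 'cV[R]_(2 * N) => M i 0) h1; rewrite !mxE => h2.
  by rewrite -[RHS]h2; apply: eq_bigr => j _; rewrite /onev !mxE mulr1.
have DS : forall i j, D i j = D j i by move=> i j; rewrite -{1}Dsym mxE.
have X0 : \sum_i (\sum_j D i j * f j) * l i = 0.
  rewrite -[RHS]hX /dotv; apply: eq_bigr => i _; by rewrite !mxE.
pose t i j := D i j * ((f i - f j) * (l i - l j)).
have tge0 : forall i j, 0 <= t i j.
  move=> i j; rewrite /t; case: (eqVneq i j) => [->|hij].
    by rewrite subrr mul0r mulr0.
  apply: mulr_ge0; first exact: Doff.
  by case: (lnprod (Fpos i) (Fpos j)) => [/ltW //|]; rewrite /f /l => ->; rewrite subrr mul0r.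
have Ssum : \sum_i \sum_j t i j = 0.
  have T1 : \sum_i \sum_j D i j * f j * l i = 0.
    rewrite -[RHS]X0; apply: eq_bigr => i _; by rewrite mulr_suml.
  have T4 : \sum_i \sum_j D i j * f i * l j = 0.
    rewrite exchange_big /= -[RHS]T1; apply: eq_bigr => i _; apply: eq_bigr => j _.
    by rewrite DS.
  have T2 : \sum_i \sum_j D i j * f j * l j = 0.
    rewrite exchange_big /= big1 // => j _.
    rewrite (eq_bigr (fun i => D j i * (f j * l j))); last by move=> i _; rewrite DS mulrA.
    by rewrite -mulr_suml rows mul0r.
  have T3 : \sum_i \sum_j D i j * f i * l i = 0.
    rewrite big1 // => i _.
    rewrite (eq_bigr (fun j => D i j * (f i * l i))); last by move=> j _; rewrite mulrA.
    by rewrite -mulr_suml rows mul0r.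
  rewrite (eq_bigr (fun i => (\sum_j (D i j * f i * l i + D i j * f j * l j))
       - (\sum_j (D i j * f j * l i + D i j * f i * l j)))); last first.
    move=> i _; rewrite -sumrB; apply: eq_bigr => j _; rewrite /t; ring.
  rewrite sumrB.
  under eq_bigr => i _ do rewrite big_split /=.
  under [X in _ - X]eq_bigr => i _ do rewrite big_split /=.
  rewrite !big_split /= T1 T2 T3 T4; ring.
have t0 : forall i j, t i j = 0.
  move=> i j.
  have H1 : forall i', predT i' -> 0 <= \sum_j t i' j.
    by move=> i' _; apply: sumr_ge0 => j2 _; apply: tge0.
  have hi : \sum_j t i j = 0.
    have h := psumr_eq0P H1 Ssum; exact: (h i isT).
  have H2 : forall j', predT j' -> 0 <= t i j' by move=> j' _; apply: tge0.
  have h := psumr_eq0P H2 hi; exact: (h j isT).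
have dz : forall i j, D i j * (f j - f i) = 0.
  move=> i j; have := t0 i j; rewrite /t => /eqP; rewrite mulf_eq0 => /orP [/eqP ->|]; first by rewrite mul0r.
  case: (lnprod (Fpos i) (Fpos j)) => [hp /eqP hz|]; first by rewrite hz ltxx in hp.
  by rewrite /f => ->; rewrite subrr mulr0.
apply/matrixP => i c; rewrite ord1 !mxE.
rewrite (eq_bigr (fun j => D i j * f i + D i j * (f j - f i))); last first.
  by move=> j _; rewrite /f; ring.
by rewrite big_split /= -mulr_suml rows mul0r big1 ?addr0 // => j _; apply: dz.
Qed.
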